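(* Let $G$ be a finitely generated group and $H$ a subgroup of finite index in $G$. Then $\gamma_H^c\preceq\gamma_G^c$.
   Context: For a finitely generated group $G$ with a fixed finite generating set $S$, let $B(n)$ denote the ball of radius $n$ about the identity in the word metric induced by $S$. The conjugacy growth function is $\gamma_G^c(n)=\#\{\text{conjugacy classes } C \text{ of } G : C\cap B(n)\neq\emptyset\}$; for $H$ it is computed with respect to a finite generating set of $H$ and conjugacy in $H$. For functions $f,g:\mathbb N\to\mathbb N$, write $f\preceq g$ if there exist constants $C,D$ such that $f(n)\le C g(Dn)$ for all $n\in\mathbb N$. *)

(* Defs.v *)
From Stdlib Require Import List Arith ClassicalEpsilon.
Import ListNotations.
Set Implicit Arguments.

Record group := Group {
  carrier :> Type;
  gmul : carrier -> carrier -> carrier;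
  gone : carrier;
  ginv : carrier -> carrier;
  gmulA : forall x y z, gmul x (gmul y z) = gmul (gmul x y) z;
  gmul1 : forall x, gmul gone x = x;
  gmulV : forall x, gmul (ginv x) x = gone
}.

Section Defs.
Variable G : group.

Definition eval_word (w : list G) : G := fold_right (@gmul G) (@gone G) w.

Definition alphabet (S : list G) : list G := S ++ map (@ginv G) S.

(* All words of length <= n over the alphabet A. *)
Fixpoint words (A : list G) (n : nat) : list (list G) :=
  match n with
  | 0 => [ [] ]
  | S m => [] :: flat_map (fun a => map (cons a) (words A m)) A
  end.

Definition ball (S : list G) (n : nat) : list G := map eval_word (words (alphabet S) n).

Definition generates (S : list G) (P : G -> Prop) : Prop :=
  (forall s, In s S -> P s) /\
  (forall g, P g -> exists w, Forall (fun a => In a (alphabet S)) w /\ eval_word w = g).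

Definition is_subgroup (P : G -> Prop) : Prop :=
  P (@gone G) /\ (forall x y, P x -> P y -> P (@gmul G x y)) /\ (forall x, P x -> P (@ginv G x)).

(* H has finite index: finitely many left cosets r H cover G. *)
Definition finite_index (P : G -> Prop) : Prop :=
  exists reps : list G, forall g, exists r, In r reps /\ P (@gmul G (@ginv G r) g).

(* Conjugacy in the subgroup P (take P = fun _ => True for conjugacy in G). *)
Definition conj_in (P : G -> Prop) (x y : G) : Prop :=
  exists h, P h /\ y = @gmul G (@gmul G (@ginv G h) x) h.

Definition conj_inb (P : G -> Prop) (x y : G) : bool :=
  if excluded_middle_informative (conj_in P x y) then true else false.

(* Remove from a list every element equivalent (eqb) to a later one. When eqb
   decides an equivalence relation, the length of the result is the number of
   equivalence classes meeting the list. *)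
Fixpoint dedup_by (eqb : G -> G -> bool) (l : list G) : list G :=
  match l with
  | [] => []
  | x :: l' => if existsb (eqb x) l' then dedup_by eqb l' else x :: dedup_by eqb l'
  end.

Definition conj_growth (P : G -> Prop) (S : list G) (n : nat) : nat :=
  length (dedup_by (conj_inb P) (ball S n)).

End Defs.

Definition preceq (f g : nat -> nat) : Prop :=
  exists C D : nat, forall n : nat, f n <= C * g (D * n).

Arguments eval_word {G} w.
Arguments alphabet {G} S.
Arguments words {G} A n.
Arguments ball {G} S n.
Arguments generates {G} S P.
Arguments is_subgroup {G} P.
Arguments finite_index {G} P.
Arguments conj_in {G} P x y.
Arguments conj_inb {G} P x y.
Arguments dedup_by {G} eqb l.
Arguments conj_growth {G} P S n.

(* Main.v *)
Require Import Defs.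
From Stdlib Require Import List Arith Lia ClassicalEpsilon.
Import ListNotations.
Arguments gmul {g} _ _.
Arguments ginv {g} _.
Arguments gone {g}.
Arguments gmulA {g} x y z.
Arguments gmul1 {g} x.
Arguments gmulV {g} x.

Set Implicit Arguments. Unset Strict Implicit.
Section Aux.
Variable G : group.
Local Notation "x ⋅ y" := (@gmul G x y) (at level 40, left associativity).
Local Notation inv := (@ginv G).
Local Notation e := (@gone G).

Lemma mulVr (x : G) : x ⋅ inv x = e.
Proof.
  set (y := inv x).
  rewrite <- (gmul1 (x ⋅ y)).
  rewrite <- (gmulV y) at 1.
  rewrite <- gmulA. rewrite (gmulA y x y). unfold y at 2. rewrite gmulV, gmul1.
  apply gmulV.
Qed.

Lemma mulr1 (x : G) : x ⋅ e = x.
Proof. rewrite <- (gmulV x), gmulA, mulVr, gmul1. reflexivity. Qed.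

Lemma inv_unique (a b : G) : a ⋅ b = e -> a = inv b.
Proof.
  intro H. rewrite <- (mulr1 a), <- (mulVr b), gmulA, H, gmul1. reflexivity.
Qed.

Lemma invM (a b : G) : inv (a ⋅ b) = inv b ⋅ inv a.
Proof.
  symmetry. apply inv_unique.
  rewrite <- gmulA, (gmulA (inv a) a b), gmulV, gmul1, gmulV. reflexivity.
Qed.

Lemma invK (a : G) : inv (inv a) = a.
Proof. symmetry. apply inv_unique. apply mulVr. Qed.

Lemma inv1 : inv e = e.
Proof. symmetry. apply inv_unique. apply gmul1. Qed.

Lemma conj_refl (P : G -> Prop) : is_subgroup P -> forall x, conj_in P x x.
Proof.
  intros [H1 _] x. exists e. split; auto. rewrite inv1, gmul1, mulr1. auto.
Qed.

Lemma conj_sym (P : G -> Prop) : is_subgroup P -> forall x y, conj_in P x y -> conj_in P y x.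
Proof.
  intros [_ [_ Hi]] x y [h [Hh ->]]. exists (inv h). split; auto.
  rewrite invK. rewrite !gmulA, mulVr, gmul1, <- gmulA, mulVr, mulr1. auto.
Qed.

Lemma conj_trans (P : G -> Prop) : is_subgroup P -> forall x y z,
  conj_in P x y -> conj_in P y z -> conj_in P x z.
Proof.
  intros [_ [Hm _]] x y z [h [Hh ->]] [k [Hk ->]]. exists (h ⋅ k). split; auto.
  rewrite invM. rewrite !gmulA. reflexivity.
Qed.

Lemma conj_inb_iff (P : G -> Prop) x y : conj_inb P x y = true <-> conj_in P x y.
Proof.
  unfold conj_inb. destruct (excluded_middle_informative (conj_in P x y)); split; auto; discriminate.
Qed.

Lemma dedup_sub (eqb : G -> G -> bool) l y : In y (dedup_by eqb l) -> In y l.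
Proof.
  induction l as [|x l IH]; simpl; auto.
  destruct (existsb (eqb x) l); simpl; intuition.
Qed.

Lemma dedup_pw (eqb : G -> G -> bool) l :
  ForallOrdPairs (fun x y => eqb x y = false) (dedup_by eqb l).
Proof.
  induction l as [|x l IH]; simpl. constructor.
  destruct (existsb (eqb x) l) eqn:E. auto.
  constructor; auto. apply Forall_forall. intros y Hy.
  apply dedup_sub in Hy. destruct (eqb x y) eqn:E2; auto.
  exfalso. assert (existsb (eqb x) l = true). apply existsb_exists. eauto.
  congruence.
Qed.

Lemma dedup_cover (eqb : G -> G -> bool) l :
  (forall x, eqb x x = true) ->
  (forall x y z, eqb x y = true -> eqb y z = true -> eqb x z = true) ->
  forall z, In z l -> exists w, In w (dedup_by eqb l) /\ eqb z w = true.
Proof.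
  intros Hr Ht. induction l as [|x l IH]; simpl; [tauto|].
  intros z Hz. destruct (existsb (eqb x) l) eqn:E.
  - destruct Hz as [<-|Hz]; auto.
    apply existsb_exists in E. destruct E as [y [Hy Hxy]].
    destruct (IH y Hy) as [w [Hw Hyw]]. eauto.
  - destruct Hz as [<-|Hz]. exists x; simpl; auto.
    destruct (IH z Hz) as [w [Hw Hzw]]. exists w; simpl; auto.
Qed.

Lemma FOP_impl (P Q : G -> G -> Prop) l :
  (forall x y, P x y -> Q x y) -> ForallOrdPairs P l -> ForallOrdPairs Q l.
Proof.
  intros HPQ Hl. induction Hl; constructor; auto.
  eapply Forall_impl; [|eauto]. simpl. auto.
Qed.

Lemma pigeon (rel : G -> G -> Prop) :
  (forall x y, rel x y -> rel y x) ->
  (forall x y z, rel x y -> rel y z -> rel x z) ->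
  forall R L, ForallOrdPairs (fun x y => ~ rel x y) R ->
  (forall x, In x R -> exists a, In a L /\ rel x a) ->
  length R <= length L.
Proof.
  intros Hs Ht R. induction R as [|x R IH]; intros L Hpw Hc; simpl. lia.
  inversion Hpw as [|? ? Hx HR]; subst.
  destruct (Hc x (or_introl eq_refl)) as [a [Ha Hxa]].
  apply in_split in Ha. destruct Ha as [L1 [L2 ->]].
  assert (length R <= length (L1 ++ L2)).
  { apply IH; auto. intros y Hy. destruct (Hc y (or_intror Hy)) as [b [Hb Hyb]].
    apply in_app_or in Hb. destruct Hb as [Hb|[<-|Hb]].
    - exists b. split; auto. apply in_or_app; auto.
    - exfalso. rewrite Forall_forall in Hx. apply (Hx y Hy). eauto.
    - exists b. split; auto. apply in_or_app; auto. }
  rewrite length_app in *. simpl. lia.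
Qed.

Lemma in_words (A : list G) n w :
  In w (words A n) <-> Forall (fun a => In a A) w /\ length w <= n.
Proof.
  revert w. induction n as [|n IH]; intro w; simpl.
  - split. intros [<-|[]]. simpl; auto.
    intros [_ Hl]. destruct w; simpl in *; auto; lia.
  - split.
    + intros [<-|Hw]. simpl; split; auto; lia.
      apply in_flat_map in Hw. destruct Hw as [a [Ha Hw]].
      apply in_map_iff in Hw. destruct Hw as [w' [<- Hw']].
      apply IH in Hw'. destruct Hw'. simpl. split; auto. lia.
    + intros [Hf Hl]. destruct w as [|a w']; auto. right.
      inversion Hf; subst. apply in_flat_map. exists a. split; auto.
      apply in_map. apply IH. simpl in Hl. split; auto; lia.
Qed.

Lemma in_ball (S : list G) n g :
  In g (ball S n) <-> exists w, Forall (fun a => In a (alphabet S)) w /\ length w <= n /\ eval_word w = g.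
Proof.
  unfold ball. rewrite in_map_iff. split.
  - intros [w [<- Hw]]. apply in_words in Hw. destruct Hw. eauto.
  - intros [w [Hf [Hl <-]]]. exists w. split; auto. apply in_words; auto.
Qed.

Lemma eval_app (w1 w2 : list G) : eval_word (w1 ++ w2) = eval_word w1 ⋅ eval_word w2.
Proof.
  induction w1 as [|a w1 IH]; simpl. rewrite gmul1; auto.
  unfold eval_word in *. simpl. rewrite IH, gmulA. auto.
Qed.

Lemma bound_words (A : list G) (l : list G) :
  (forall a, In a l -> exists w, Forall (fun b => In b A) w /\ eval_word w = a) ->
  exists D, forall a, In a l -> exists w, Forall (fun b => In b A) w /\ length w <= D /\ eval_word w = a.
Proof.
  induction l as [|x l IH]; intro H.
  - exists 0. simpl; tauto.
  - destruct IH as [D HD]. intros a Ha; apply H; simpl; auto.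
    destruct (H x (or_introl eq_refl)) as [wx [Hx Ex]].
    exists (max D (length wx)). intros a [<-|Ha].
    + exists wx. split; auto. split; auto. lia.
    + destruct (HD a Ha) as [w [Hw [Hl Ew]]]. exists w. split; auto. split; auto. lia.
Qed.

End Aux.

Theorem lemma1 (G : group) (S : list G) (H : G -> Prop) (T : list G) :
  generates S (fun _ => True) ->
  is_subgroup H ->
  finite_index H ->
  generates T H ->
  preceq (conj_growth H T) (conj_growth (fun _ => True) S).
Proof.
  intros [_ HS] Hsub [reps Hreps] _.
  destruct (@bound_words G (alphabet S) (alphabet T)) as [D HD].
  { intros a _. apply HS. auto. }
  assert (Hball : forall n g, In g (ball T n) -> In g (ball S (D * n))).
  { intros n g Hg. apply in_ball in Hg. apply in_ball.
    destruct Hg as [w [Hf [Hl <-]]]. clear HS.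
    revert n Hl. induction w as [|a w IH]; intros n Hl.
    - exists []. simpl. split; auto. split; auto. lia.
    - inversion Hf; subst. destruct n as [|m]; simpl in Hl; [lia|].
      destruct (HD a H2) as [wa [Hwa [Hla Ea]]].
      destruct (IH H3 m ltac:(lia)) as [w' [Hw' [Hl' E']]].
      exists (wa ++ w'). split. apply Forall_app; auto.
      split. rewrite length_app. nia.
      rewrite eval_app, Ea, E'. reflexivity. }
  assert (HsubT : is_subgroup (G:=G) (fun _ => True)) by (repeat split).
  exists (length reps), D. intro n. unfold conj_growth.
  set (RG := dedup_by (conj_inb (fun _ : G => True)) (ball S (D * n))).
  set (L := flat_map (fun g => map (fun r => gmul (gmul (ginv r) g) r) reps) RG).
  assert (HL : length L = length reps * length RG).
  { unfold L. clear. induction RG as [|g RG IH]; simpl. lia.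
    rewrite length_app, length_map, IH. lia. }
  rewrite <- HL.
  apply (@pigeon G (conj_in H)).
  - apply conj_sym; auto.
  - apply conj_trans; auto.
  - generalize (dedup_pw (conj_inb H) (ball T n)). apply FOP_impl.
    intros x y E Hxy. apply conj_inb_iff in Hxy. congruence.
  - intros x Hx. apply dedup_sub in Hx. apply Hball in Hx.
    destruct (@dedup_cover G (conj_inb (fun _ : G => True)) (ball S (D * n))) with (z := x)
      as [w [Hw Hxw]]; auto.
    + intro y. apply conj_inb_iff. apply conj_refl; auto.
    + intros a b c Hab Hbc. apply conj_inb_iff. apply conj_inb_iff in Hab, Hbc.
      eapply conj_trans; eauto.
    + apply conj_inb_iff in Hxw. apply (conj_sym HsubT) in Hxw.
      destruct Hxw as [u [_ Hx']].
      destruct (Hreps u) as [r [Hr Hh]].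
      exists (gmul (gmul (ginv r) w) r). split.
      * unfold L. apply in_flat_map. exists w. split; auto. apply in_map_iff. exists r. auto.
      * apply (conj_sym Hsub). remember (gmul (ginv r) u) as h eqn:Eh.
        assert (Hu : u = gmul r h).
        { rewrite Eh, gmulA, mulVr, gmul1. auto. }
        exists h. split; auto.
        rewrite Hx', Hu, invM, !gmulA. reflexivity.
Qed.
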